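(* Let $\zeta_5=e^{2\pi i/5}$, let $A=\theta[1;\tfrac15]$ and $B=\theta[1;\tfrac35]$ (theta constants, functions of $\tau$), and for $k\in\{1,3,5,7,9\}$ let $f_k=\theta[\tfrac15;\tfrac k5](\zeta,\tau)$. Then for every $(\zeta,\tau)\in\mathbb{C}\times\mathbb{H}^2$: $$B^2f_1f_9-A^2f_3f_7+ABf_5^2=0,$$ $$\zeta_5^2A^2f_3f_9-\zeta_5^2B^2f_5f_7+ABf_1^2=0,$$ $$B^2f_1f_3+\zeta_5^2A^2f_5f_9-\zeta_5^2ABf_7^2=0,$$ $$A^2f_1f_5+\zeta_5^2B^2f_7f_9-ABf_3^2=0,$$ $$A^2f_1f_7-B^2f_3f_5+\zeta_5^2ABf_9^2=0.$$
   Context: Let $\mathbb{H}^2=\{\tau\in\mathbb{C}:\Im\tau>0\}$. For $(\epsilon,\epsilon')\in\mathbb{R}^2$, $$\theta[\epsilon;\epsilon'](\zeta,\tau)=\sum_{n\in\mathbb{Z}}\exp\Big(2\pi i\Big[\tfrac12\big(n+\tfrac{\epsilon}{2}\big)^2\tau+\big(n+\tfrac{\epsilon}{2}\big)\big(\zeta+\tfrac{\epsilon'}{2}\big)\Big]\Big),$$ and $\theta[\epsilon;\epsilon']=\theta[\epsilon;\epsilon'](0,\tau)$ denotes the theta constant. *)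

(* Defs.v *)
From Stdlib Require Import Reals ZArith.
From Coquelicot Require Import Coquelicot.
Open Scope R_scope.

Definition cexp (z : C) : C :=
  (exp (Re z) * cos (Im z), exp (Re z) * sin (Im z)).

(* For the theta series the
   family is absolutely summable when Im tau > 0, so this is the usual value. *)
Definition Zsum (f : Z -> C) : C :=
  (Series (fun m => Re (f (Z.of_nat m))) + Series (fun m => Re (f (- Z.of_nat m - 1)%Z)),
   Series (fun m => Im (f (Z.of_nat m))) + Series (fun m => Im (f (- Z.of_nat m - 1)%Z))).

Definition theta_term (eps eps' : R) (zeta tau : C) (n : Z) : C :=
  let a : C := RtoC (IZR n + eps / 2) in
  cexp (Cmult (Cmult (RtoC (2 * PI)) Ci)
          (Cplus (Cmult (Cmult (RtoC (1/2)) (Cmult a a)) tau)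
                 (Cmult a (Cplus zeta (RtoC (eps' / 2)))))).

Definition theta (eps eps' : R) (zeta tau : C) : C :=
  Zsum (theta_term eps eps' zeta tau).

Definition theta_const (eps eps' : R) (tau : C) : C := theta eps eps' (RtoC 0) tau.

Definition zeta5 : C := cexp (Cmult (RtoC (2 * PI / 5)) Ci).

(* Main.v *)
Require Import Defs.
From Stdlib Require Import Reals Lra Lia ZArith List Permutation.
From Coquelicot Require Import Coquelicot.
Open Scope R_scope.

Fixpoint lsum {A} (l : list A) (F : A -> C) : C :=
  match l with nil => RtoC 0 | x :: l' => Cplus (F x) (lsum l' F) end.

Fixpoint rsum {A} (l : list A) (F : A -> R) : R :=
  match l with nil => 0 | x :: l' => F x + rsum l' F end.

Lemma lsum_app {A} (l1 l2 : list A) F : lsum (l1 ++ l2) F = Cplus (lsum l1 F) (lsum l2 F).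
Proof. induction l1; simpl. ring. rewrite IHl1. ring. Qed.

Lemma rsum_app {A} (l1 l2 : list A) F : rsum (l1 ++ l2) F = rsum l1 F + rsum l2 F.
Proof. induction l1; simpl. ring. rewrite IHl1. ring. Qed.

Lemma lsum_ext {A} (l : list A) F G : (forall x, In x l -> F x = G x) -> lsum l F = lsum l G.
Proof. induction l; simpl; intros H; auto. rewrite H, IHl; auto. Qed.

Lemma rsum_ext {A} (l : list A) F G : (forall x, In x l -> F x = G x) -> rsum l F = rsum l G.
Proof. induction l; simpl; intros H; auto. rewrite H, IHl; auto. Qed.

Lemma lsum_perm {A} (l1 l2 : list A) F : Permutation l1 l2 -> lsum l1 F = lsum l2 F.
Proof. induction 1; simpl; try congruence. ring. Qed.

Lemma lsum_map {A B} (g : A -> B) l F : lsum (map g l) F = lsum l (fun x => F (g x)).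
Proof. induction l; simpl; congruence. Qed.

Lemma rsum_map {A B} (g : A -> B) l F : rsum (map g l) F = rsum l (fun x => F (g x)).
Proof. induction l; simpl; congruence. Qed.

Lemma lsum_plus {A} (l : list A) F G : lsum l (fun x => Cplus (F x) (G x)) = Cplus (lsum l F) (lsum l G).
Proof. induction l; simpl. ring. rewrite IHl. ring. Qed.

Lemma lsum_scal {A} (l : list A) c F : lsum l (fun x => Cmult c (F x)) = Cmult c (lsum l F).
Proof. induction l; simpl. ring. rewrite IHl. ring. Qed.

Lemma rsum_scal {A} (l : list A) c F : rsum l (fun x => c * F x) = c * rsum l F.
Proof. induction l; simpl. ring. rewrite IHl. ring. Qed.

Lemma lsum_zero {A} (l : list A) F : (forall x, In x l -> F x = RtoC 0) -> lsum l F = RtoC 0.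
Proof. induction l; simpl; intros H; auto. rewrite H, IHl; auto. ring. Qed.

Lemma lsum_flat_map {A B} (g : A -> list B) l F :
  lsum (flat_map g l) F = lsum l (fun x => lsum (g x) F).
Proof. induction l; simpl; auto. rewrite lsum_app, IHl. auto. Qed.

Lemma rsum_flat_map {A B} (g : A -> list B) l F :
  rsum (flat_map g l) F = rsum l (fun x => rsum (g x) F).
Proof. induction l; simpl; auto. rewrite rsum_app, IHl. auto. Qed.

Lemma lsum_filter {A} (p : A -> bool) l F :
  lsum l F = Cplus (lsum (filter p l) F) (lsum (filter (fun x => negb (p x)) l) F).
Proof. induction l; simpl. ring. destruct (p a); simpl; rewrite IHl; ring. Qed.

Lemma lsum_if {A} (p : A -> bool) l F :
  lsum l (fun x => if p x then F x else RtoC 0) = lsum (filter p l) F.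
Proof. induction l; simpl; auto. destruct (p a); simpl; rewrite IHl; auto. ring. Qed.

Lemma rsum_le {A} (l : list A) F G : (forall x, In x l -> F x <= G x) -> rsum l F <= rsum l G.
Proof. induction l; simpl; intros H. lra. pose proof (H a (or_introl eq_refl)).
  assert (rsum l F <= rsum l G) by auto. lra. Qed.

Lemma rsum_nonneg {A} (l : list A) F : (forall x, In x l -> 0 <= F x) -> 0 <= rsum l F.
Proof. induction l; simpl; intros H. lra. pose proof (H a (or_introl eq_refl)).
  assert (0 <= rsum l F) by auto. lra. Qed.

Lemma rsum_filter_le {A} (p : A -> bool) l F : (forall x, In x l -> 0 <= F x) ->
  rsum (filter p l) F <= rsum l F.
Proof. induction l; simpl; intros H. lra. pose proof (H a (or_introl eq_refl)).
  assert (rsum (filter p l) F <= rsum l F) by auto. destruct (p a); simpl; lra. Qed.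

Lemma Cmod_lsum {A} (l : list A) F : Cmod (lsum l F) <= rsum l (fun x => Cmod (F x)).
Proof. induction l; simpl. rewrite Cmod_0; lra.
  eapply Rle_trans. apply Cmod_triangle. lra. Qed.

Lemma Re_lsum {A} (l : list A) F : Re (lsum l F) = rsum l (fun x => Re (F x)).
Proof. induction l; simpl; auto. rewrite <- IHl. reflexivity. Qed.
Lemma Im_lsum {A} (l : list A) F : Im (lsum l F) = rsum l (fun x => Im (F x)).
Proof. induction l; simpl; auto. rewrite <- IHl. reflexivity. Qed.
Definition E2 (X : C) : C := cexp (Cmult (Cmult (RtoC (2 * PI)) Ci) X).

Lemma cexp_add x y : cexp (Cplus x y) = Cmult (cexp x) (cexp y).
Proof. destruct x as [a b], y as [c d]. unfold cexp, Cmult, Cplus; simpl.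
  rewrite exp_plus, cos_plus, sin_plus. f_equal; ring. Qed.

Lemma E2_add x y : E2 (Cplus x y) = Cmult (E2 x) (E2 y).
Proof. unfold E2. rewrite <- cexp_add. f_equal. ring. Qed.

Lemma Cmod_cexp z : Cmod (cexp z) = exp (Re z).
Proof. destruct z as [a b]. unfold Cmod, cexp, Re, Im; cbn [fst snd].
  replace ((exp a * cos b) ^ 2 + (exp a * sin b) ^ 2) with (Rsqr (exp a)).
  rewrite sqrt_Rsqr; auto. left; apply exp_pos.
  rewrite <- (Rmult_1_r (Rsqr (exp a))), <- (sin2_cos2 b). unfold Rsqr. ring. Qed.

Lemma Re_E2arg X : Re (Cmult (Cmult (RtoC (2 * PI)) Ci) X) = - (2 * PI) * Im X.
Proof. destruct X; simpl. ring. Qed.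

Lemma exp_le_exp x y : x <= y -> exp x <= exp y.
Proof. intros [H|H]. left; apply exp_increasing; auto. subst; lra. Qed.

Definition Kb (zeta tau : C) : R :=
  exp ((2 * PI * Rabs (Im zeta) + 1) * (2 * PI * Rabs (Im zeta) + 1) / (4 * PI * Im tau) + 1/2).

Lemma theta_term_bound eps eps' zeta tau : 0 < Im tau -> Rabs eps <= 1 ->
  forall n, Cmod (theta_term eps eps' zeta tau n) <= Kb zeta tau * exp (- Rabs (IZR n)).
Proof.
  intros Hy He n. unfold Kb. set (y := Im tau). set (h := Rabs (Im zeta)).
  set (B := 2 * PI * h + 1). set (K0 := B * B / (4 * PI * y)).
  unfold theta_term. fold (E2 (Cplus (Cmult (Cmult (RtoC (1 / 2)) (Cmult (RtoC (IZR n + eps / 2)) (RtoC (IZR n + eps / 2)))) tau)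
           (Cmult (RtoC (IZR n + eps / 2)) (Cplus zeta (RtoC (eps' / 2)))))).
  unfold E2. rewrite Cmod_cexp, Re_E2arg. rewrite <- exp_plus. 
  set (r := IZR n + eps / 2).
  assert (HIm : Im (Cplus (Cmult (Cmult (RtoC (1 / 2)) (Cmult (RtoC r) (RtoC r))) tau)
          (Cmult (RtoC r) (Cplus zeta (RtoC (eps' / 2))))) = 1/2 * r * r * y + r * Im zeta).
  { unfold y. clearbody r. destruct tau, zeta. unfold Cmult, Cplus, RtoC, Im, Re; cbn [fst snd]. lra. }
  rewrite HIm. apply exp_le_exp.
  assert (Hpi : 0 < PI) by apply PI_RGT_0.
  assert (Hu : Rabs (IZR n) <= Rabs r + 1/2).
  { unfold r. 
    pose proof (Rabs_triang (IZR n + eps/2) (- (eps/2))). rename H into H0; rewrite Rabs_Ropp in H0.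
    replace (IZR n + eps / 2 + - (eps / 2)) with (IZR n) in H0 by lra.
    assert (Rabs (eps/2) <= 1/2). { unfold Rdiv. rewrite Rabs_mult. rewrite (Rabs_right (/2)) by lra. lra. }
    lra. }
  assert (Hre : - (r * Im zeta) <= Rabs r * h).
  { unfold h. rewrite <- Rabs_mult. rewrite <- Rabs_Ropp. apply Rle_abs. }
  assert (Hq : - PI * y * (Rabs r)^2 + B * Rabs r <= K0).
  { assert (Hpy : 0 < 4 * PI * y) by (apply Rmult_lt_0_compat; auto; lra).
    unfold K0. apply Rmult_le_reg_r with (4 * PI * y). lra.
    replace (B * B / (4 * PI * y) * (4 * PI * y)) with (B*B). 2:{ field. split; apply Rgt_not_eq; auto. }
    assert (0 <= (B - 2 * PI * y * Rabs r)^2) by apply pow2_ge_0. nra. }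
  assert (Hr2 : r * r = (Rabs r)^2). { simpl. rewrite Rmult_1_r. rewrite <- Rabs_mult.
     rewrite Rabs_right; [ring|]. apply Rle_ge, Rle_0_sqr. }
  unfold B in Hq. 
  assert (0 <= h) by apply Rabs_pos.
  replace (- (2 * PI) * (1 / 2 * r * r * y + r * Im zeta)) with (- PI * y * (r*r) + 2 * PI * (- (r * Im zeta))) by field.
  rewrite Hr2. nra.
Qed.

Definition zr (M : nat) : list Z :=
  map Z.of_nat (seq 0 (S M)) ++ map (fun m => (- Z.of_nat m - 1)%Z) (seq 0 (S M)).

Definition Clim (u : nat -> C) (l : C) :=
  is_lim_seq (fun M => Re (u M)) (Re l) /\ is_lim_seq (fun M => Im (u M)) (Im l).

Lemma rsum_seq g M : rsum (seq 0 (S M)) g = sum_n g M.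
Proof. induction M. simpl. rewrite sum_O. ring.
  rewrite seq_S, rsum_app, IHM, sum_Sn. simpl. unfold plus; simpl. ring. Qed.

Lemma exp_neg_pow m : exp (- INR m) = (exp (-1))^m.
Proof. induction m. simpl. rewrite Ropp_0, exp_0. auto.
  rewrite S_INR. replace (- (INR m + 1)) with (- INR m + -1) by ring. rewrite exp_plus, IHm. simpl. ring. Qed.

Lemma ex_series_bound (a : nat -> R) K : (forall m, Rabs (a m) <= K * exp (- INR m)) -> ex_series a.
Proof. intros H. apply (ex_series_le a (fun m => scal K ((exp (-1))^m))).
  intros m. rewrite <- exp_neg_pow. apply H.
  apply (ex_series_scal_l (K:=R_AbsRing) (V:=R_NormedModule) K (fun m => exp (-1) ^ m)). apply ex_series_geom. rewrite Rabs_right.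
  rewrite <- exp_0. apply exp_increasing. lra. left; apply exp_pos. Qed.

Lemma Rabs_IZR_pos m : Rabs (IZR (Z.of_nat m)) = INR m.
Proof. rewrite <- INR_IZR_INZ. apply Rabs_right. apply Rle_ge, pos_INR. Qed.

Lemma Rabs_IZR_neg m : Rabs (IZR (- Z.of_nat m - 1)) = INR m + 1.
Proof. rewrite minus_IZR, opp_IZR, <- INR_IZR_INZ. rewrite Rabs_left1.
  ring. pose proof (pos_INR m). lra. Qed.

Lemma re_bound_exp (f : Z -> C) K : 0 < K -> (forall n, Cmod (f n) <= K * exp (- Rabs (IZR n))) ->
  (forall m, Rabs (Re (f (Z.of_nat m))) <= K * exp (- INR m)) /\
  (forall m, Rabs (Im (f (Z.of_nat m))) <= K * exp (- INR m)) /\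
  (forall m, Rabs (Re (f (- Z.of_nat m - 1)%Z)) <= K * exp (- INR m)) /\
  (forall m, Rabs (Im (f (- Z.of_nat m - 1)%Z)) <= K * exp (- INR m)).
Proof. intros HK H.
  assert (Hn : forall m, K * exp (- Rabs (IZR (- Z.of_nat m - 1))) <= K * exp (- INR m)).
  { intros m. rewrite Rabs_IZR_neg. apply Rmult_le_compat_l. lra. apply exp_le_exp. lra. }
  repeat split; intros m.
  - eapply Rle_trans. apply re_le_Cmod. rewrite <- Rabs_IZR_pos. apply H.
  - eapply Rle_trans. 2:{ rewrite <- Rabs_IZR_pos. apply H. }
    eapply Rle_trans. 2: apply Rmax_Cmod. apply Rmax_r.
  - eapply Rle_trans. apply re_le_Cmod. eapply Rle_trans. apply H. apply Hn.
  - eapply Rle_trans. 2: apply Hn. eapply Rle_trans. 2: apply H.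
    eapply Rle_trans. 2: apply Rmax_Cmod. apply Rmax_r.
Qed.

Lemma series_lim (a : nat -> R) : ex_series a -> is_lim_seq (sum_n a) (Series a).
Proof. intros H. apply Series_correct in H. exact H. Qed.

Lemma Zsum_lim (f : Z -> C) K : 0 < K -> (forall n, Cmod (f n) <= K * exp (- Rabs (IZR n))) ->
  Clim (fun M => lsum (zr M) f) (Zsum f).
Proof. intros HK H. destruct (re_bound_exp f K HK H) as (H1 & H2 & H3 & H4).
  unfold Clim. split.
  - eapply is_lim_seq_ext. 2: apply is_lim_seq_plus'; apply series_lim; eapply ex_series_bound; eauto.
    intros M. cbv beta. unfold zr. rewrite Re_lsum, rsum_app, !rsum_map. rewrite !rsum_seq. auto.
  - eapply is_lim_seq_ext. 2: apply is_lim_seq_plus'; apply series_lim; eapply ex_series_bound; eauto.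
    intros M. cbv beta. unfold zr. rewrite Im_lsum, rsum_app, !rsum_map, !rsum_seq. auto.
Qed.

Lemma lsum_prod {A B} (l1 : list A) (l2 : list B) F :
  lsum (list_prod l1 l2) F = lsum l1 (fun a => lsum l2 (fun b => F (a, b))).
Proof. induction l1; simpl; auto. rewrite lsum_app, lsum_map, IHl1. auto. Qed.

Lemma rsum_prod {A B} (l1 : list A) (l2 : list B) F :
  rsum (list_prod l1 l2) F = rsum l1 (fun a => rsum l2 (fun b => F (a, b))).
Proof. induction l1; simpl; auto. rewrite rsum_app, rsum_map, IHl1. auto. Qed.

Lemma NoDup_prod {A B} (l1 : list A) (l2 : list B) : NoDup l1 -> NoDup l2 -> NoDup (list_prod l1 l2).
Proof. intros H1 H2. induction H1; simpl. constructor.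
  apply NoDup_app; auto.
  - apply FinFun.Injective_map_NoDup; auto. intros u v E; inversion E; auto.
  - intros [a b] Ha Hb. apply in_map_iff in Ha. destruct Ha as (y & Ey & _). inversion Ey; subst.
    apply in_prod_iff in Hb. tauto. Qed.

Lemma lsum_comm {A B} (l1 : list A) (l2 : list B) F :
  lsum l1 (fun a => lsum l2 (fun b => F a b)) = lsum l2 (fun b => lsum l1 (fun a => F a b)).
Proof. induction l1; simpl. symmetry; apply lsum_zero; auto.
  rewrite IHl1, <- lsum_plus. auto. Qed.

Lemma lsum_const_mult {A} (l : list A) F c : lsum l (fun x => Cmult (F x) c) = Cmult (lsum l F) c.
Proof. induction l; simpl. ring. rewrite IHl. ring. Qed.

Lemma rsum_const_mult {A} (l : list A) F c : rsum l (fun x => F x * c) = rsum l F * c.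
Proof. induction l; simpl. ring. rewrite IHl. ring. Qed.

Definition Z4 := (Z * Z * Z * Z)%type.

Definition box (M : nat) : list Z4 := list_prod (list_prod (list_prod (zr M) (zr M)) (zr M)) (zr M).

Lemma lsum_box M (f1 f2 f3 f4 : Z -> C) :
  lsum (box M) (fun x => match x with (a, b, c, d) => Cmult (Cmult (Cmult (f1 a) (f2 b)) (f3 c)) (f4 d) end)
  = Cmult (Cmult (Cmult (lsum (zr M) f1) (lsum (zr M) f2)) (lsum (zr M) f3)) (lsum (zr M) f4).
Proof. unfold box, Z4. rewrite !lsum_prod.
  set (S2 := lsum (zr M) f2). set (S3 := lsum (zr M) f3). set (S4 := lsum (zr M) f4).
  replace (Cmult (Cmult (Cmult (lsum (zr M) f1) S2) S3) S4) with
    (lsum (zr M) (fun a => Cmult (f1 a) (Cmult S2 (Cmult S3 S4)))) by (rewrite lsum_const_mult; ring).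
  apply lsum_ext; intros a _.
  replace (Cmult (f1 a) (Cmult S2 (Cmult S3 S4))) with
    (lsum (zr M) (fun b => Cmult (Cmult (f1 a) (f2 b)) (Cmult S3 S4))) by (rewrite lsum_const_mult, lsum_scal; unfold S2; ring).
  apply lsum_ext; intros b _.
  replace (Cmult (Cmult (f1 a) (f2 b)) (Cmult S3 S4)) with
    (lsum (zr M) (fun c => Cmult (Cmult (Cmult (f1 a) (f2 b)) (f3 c)) S4)) by (rewrite lsum_const_mult, lsum_scal; unfold S3; ring).
  apply lsum_ext; intros c _.
  unfold S4. rewrite <- lsum_scal. apply lsum_ext; intros d _. ring. Qed.

Lemma rsum_box M (f1 f2 f3 f4 : Z -> R) :
  rsum (box M) (fun x => match x with (a, b, c, d) => f1 a * f2 b * f3 c * f4 d end)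
  = rsum (zr M) f1 * rsum (zr M) f2 * rsum (zr M) f3 * rsum (zr M) f4.
Proof. unfold box, Z4. rewrite !rsum_prod.
  set (S2 := rsum (zr M) f2). set (S3 := rsum (zr M) f3). set (S4 := rsum (zr M) f4).
  replace (rsum (zr M) f1 * S2 * S3 * S4) with
    (rsum (zr M) (fun a => f1 a * (S2 * (S3 * S4)))) by (rewrite rsum_const_mult; ring).
  apply rsum_ext; intros a _.
  replace (f1 a * (S2 * (S3 * S4))) with
    (rsum (zr M) (fun b => f1 a * f2 b * (S3 * S4))) by (rewrite rsum_const_mult, rsum_scal; unfold S2; ring).
  apply rsum_ext; intros b _.
  replace (f1 a * f2 b * (S3 * S4)) with
    (rsum (zr M) (fun c => f1 a * f2 b * f3 c * S4)) by (rewrite rsum_const_mult, rsum_scal; unfold S3; ring).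
  apply rsum_ext; intros c _.
  unfold S4. rewrite <- rsum_scal. apply rsum_ext; intros d _. ring. Qed.

Lemma Clim_mult u v a b : Clim u a -> Clim v b -> Clim (fun M => Cmult (u M) (v M)) (Cmult a b).
Proof. intros [H1 H2] [H3 H4]. destruct a as [a1 a2], b as [b1 b2]. split; simpl.
  - apply is_lim_seq_minus'; apply is_lim_seq_mult'; auto.
  - apply is_lim_seq_plus'; apply is_lim_seq_mult'; auto. Qed.

Lemma Clim_plus u v a b : Clim u a -> Clim v b -> Clim (fun M => Cplus (u M) (v M)) (Cplus a b).
Proof. intros [H1 H2] [H3 H4]. split; simpl; apply is_lim_seq_plus'; auto. Qed.

Lemma Clim_const c : Clim (fun _ => c) c.
Proof. split; apply is_lim_seq_const. Qed.

Lemma Clim_ext u v a : (forall M, u M = v M) -> Clim u a -> Clim v a.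
Proof. intros E [H1 H2]. split; eapply is_lim_seq_ext; eauto; intros; simpl; rewrite E; auto. Qed.

Lemma Clim_unique u a b : Clim u a -> Clim u b -> a = b.
Proof. intros [H1 H2] [H3 H4]. apply is_lim_seq_unique in H1, H2, H3, H4.
  rewrite H1 in H3. rewrite H2 in H4. injection H3; injection H4. destruct a, b; simpl. intros; subst; auto. Qed.

Lemma Clim_lsum {A} (l : list A) (u : A -> nat -> C) (a : A -> C) :
  (forall x, In x l -> Clim (u x) (a x)) -> Clim (fun M => lsum l (fun x => u x M)) (lsum l a).
Proof. induction l; simpl; intros H. apply Clim_const.
  apply Clim_plus; auto. Qed.

Lemma Rabs_bt x y : Rabs x <= y -> - y <= x <= y.
Proof. unfold Rabs; destruct (Rcase_abs x); lra. Qed.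

Lemma Clim_zero u e : (forall M, Cmod (u M) <= e M) -> is_lim_seq e 0 -> Clim u (RtoC 0).
Proof. intros H He. assert (Hm : is_lim_seq (fun M => - e M) 0).
  { apply is_lim_seq_opp in He. simpl in He. replace 0 with (-0) by ring. exact He. }
  split; simpl; apply is_lim_seq_le_le with (fun M => - e M) e; auto; intros M;
    apply Rabs_bt; eapply Rle_trans; try apply H.
  - apply re_le_Cmod.
  - eapply Rle_trans. 2: apply Rmax_Cmod. apply Rmax_r.
Qed.

Record pd := mkpd { sg : Z; ex : Z; c1 : Z; c2 : Z; k1 : Z; k2 : Z }.

Definition Eexp (kap : Z) (p : pd) (x : Z4) : Z :=
  let '(t, d, P, D) := x in
  (ex p + (c1 p + c2 p) / 2 * P + (c1 p - c2 p) / 2 * D + (k1 p + k2 p) / 2 * t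
     + (k1 p - k2 p) / 2 * d + (k1 p + k2 p - kap) / 10)%Z.

Definition condb (x : Z4) : bool := let '(t, d, P, D) := x in (Z.odd (P + D) && Z.even (d - t))%bool.

Definition fd (x : Z4) : Z4 := let '(t, d, P, D) := x in (t, (-d)%Z, P, D).
Definition fP (x : Z4) : Z4 := let '(t, d, P, D) := x in (t, d, (-P)%Z, D).
Definition fD (x : Z4) : Z4 := let '(t, d, P, D) := x in (t, d, P, (-D)%Z).
Definition sdP (x : Z4) : Z4 := let '(t, d, P, D) := x in (t, P, d, D).
Definition sdD (x : Z4) : Z4 := let '(t, d, P, D) := x in (t, D, P, d).
Definition sPD (x : Z4) : Z4 := let '(t, d, P, D) := x in (t, d, D, P).
Definition gid (x : Z4) : Z4 := x.

Definition compl (l1 l2 : list (Z4 -> Z4)) : list (Z4 -> Z4) :=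
  flat_map (fun a => map (fun b => fun x => a (b x)) l2) l1.

Definition gs : list (Z4 -> Z4) :=
  compl (gid :: fd :: nil) (compl (gid :: fP :: nil) (compl (gid :: fD :: nil)
    (compl (gid :: sdP :: nil) (gid :: sdD :: sPD :: nil)))).

Definition terms (kap : Z) (data : list pd) (x : Z4) : list (Z * Z) :=
  flat_map (fun g => if condb (g x) then map (fun p => (sg p, Eexp kap p (g x))) data else nil) gs.

Definition Z5 := (Z * Z * Z * Z * Z)%type.

Definition addc (a : Z5) (s e : Z) : Z5 :=
  let r := (e mod 10)%Z in
  let s' := if (r <? 5)%Z then s else (- s)%Z in
  let '(a0, a1, a2, a3, a4) := a in
  match (r mod 5)%Z with
  | 0%Z => ((a0 + s')%Z, a1, a2, a3, a4)
  | 1%Z => (a0, (a1 + s')%Z, a2, a3, a4)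
  | 2%Z => (a0, a1, (a2 + s')%Z, a3, a4)
  | 3%Z => (a0, a1, a2, (a3 + s')%Z, a4)
  | _ => (a0, a1, a2, a3, (a4 + s')%Z)
  end.

Definition coeffs (l : list (Z * Z)) : Z5 :=
  fold_right (fun se a => addc a (fst se) (snd se)) (0, 0, 0, 0, 0)%Z l.

Definition okc (a : Z5) : bool :=
  let '(a0, a1, a2, a3, a4) := a in
  ((a0 - a4 =? 0) && (a1 + a4 =? 0) && (a2 - a4 =? 0) && (a3 + a4 =? 0))%Z%bool.

Definition r10 : list Z := map Z.of_nat (seq 0 10).
Definition box10 : list Z4 := list_prod (list_prod (list_prod r10 r10) r10) r10.

Definition check (kap : Z) (data : list pd) : bool :=
  forallb (fun x => okc (coeffs (terms kap data x))) box10.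

Definition validp (kap : Z) (p : pd) : bool :=
  (Z.even (c1 p + c2 p) && Z.even (c1 p - c2 p) && Z.even (k1 p + k2 p) && Z.even (k1 p - k2 p)
   && ((k1 p + k2 p - kap) mod 10 =? 0))%Z%bool.

Definition data1 := mkpd 1 0 3 3 1 9 :: mkpd (-1) 0 1 1 3 7 :: mkpd 1 0 1 3 5 5 :: nil.
Definition data2 := mkpd 1 4 1 1 3 9 :: mkpd (-1) 4 3 3 5 7 :: mkpd 1 0 1 3 1 1 :: nil.
Definition data3 := mkpd 1 0 3 3 1 3 :: mkpd 1 4 1 1 5 9 :: mkpd (-1) 4 1 3 7 7 :: nil.
Definition data4 := mkpd 1 0 1 1 1 5 :: mkpd 1 4 3 3 7 9 :: mkpd (-1) 0 1 3 3 3 :: nil.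
Definition data5 := mkpd 1 0 1 1 1 7 :: mkpd (-1) 0 3 3 3 5 :: mkpd 1 4 1 3 9 9 :: nil.


Definition w (e : Z) : C := E2 (RtoC (IZR e / 10)).

Lemma E2_R r : E2 (RtoC r) = (cos (2 * PI * r), sin (2 * PI * r)).
Proof. unfold E2, cexp, RtoC, Cmult, Ci, Re, Im; cbn [fst snd].
  replace ((2 * PI * 0 - 0 * 1) * r - (2 * PI * 1 + 0 * 0) * 0) with 0 by ring.
  replace ((2 * PI * 0 - 0 * 1) * 0 + (2 * PI * 1 + 0 * 0) * r) with (2 * PI * r) by ring.
  rewrite exp_0. f_equal; ring. Qed.

Lemma E2_R_add a b : E2 (RtoC (a + b)) = Cmult (E2 (RtoC a)) (E2 (RtoC b)).
Proof. rewrite <- E2_add. f_equal. unfold RtoC, Cplus; simpl. f_equal; ring. Qed.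

Lemma E2_nat k : E2 (RtoC (INR k)) = RtoC 1.
Proof. rewrite E2_R. pose proof (cos_period 0 k). pose proof (sin_period 0 k).
  rewrite Rplus_0_l, cos_0 in H. rewrite Rplus_0_l, sin_0 in H0.
  replace (2 * PI * INR k) with (2 * INR k * PI) by ring. rewrite H, H0. reflexivity. Qed.

Lemma E2_int q : E2 (RtoC (IZR q)) = RtoC 1.
Proof. destruct (Z_le_gt_dec 0 q).
  - replace (IZR q) with (INR (Z.to_nat q)). apply E2_nat. rewrite INR_IZR_INZ. f_equal. lia.
  - replace (IZR q) with (- INR (Z.to_nat (- q))). 
    rewrite E2_R. pose proof (E2_nat (Z.to_nat (-q))). rewrite E2_R in H.
    replace (2 * PI * - INR (Z.to_nat (- q))) with (- (2 * PI * INR (Z.to_nat (- q)))) by ring.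
    rewrite cos_neg, sin_neg. injection H; intros H1 H2. rewrite H1, H2. unfold RtoC. f_equal; ring.
    rewrite INR_IZR_INZ. rewrite Z2Nat.id by lia. rewrite opp_IZR. ring.
Qed.

Lemma E2_half : E2 (RtoC (1/2)) = RtoC (-1).
Proof. rewrite E2_R. replace (2 * PI * (1/2)) with PI by field. rewrite cos_PI, sin_PI. reflexivity. Qed.

Lemma w_add a b : w (a + b) = Cmult (w a) (w b).
Proof. unfold w. rewrite <- E2_R_add. f_equal. f_equal. rewrite plus_IZR. field. Qed.

Lemma w_red e : w e = Cmult (RtoC (if (e mod 10 <? 5)%Z then 1 else -1)) (w ((e mod 10) mod 5)).
Proof.
  assert (He : e = (10 * (e / 10) + e mod 10)%Z) by (apply Z.div_mod; lia).
  assert (Hw10 : forall q, w (10 * q) = RtoC 1).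
  { intros q. unfold w. rewrite mult_IZR. replace (10 * IZR q / 10) with (IZR q) by field. apply E2_int. }
  rewrite He at 1. rewrite w_add, Hw10.
  assert (Hr : (0 <= e mod 10 < 10)%Z) by (apply Z.mod_pos_bound; lia).
  destruct (Z.ltb_spec (e mod 10) 5).
  - rewrite (Z.mod_small (e mod 10) 5) by lia. unfold RtoC. ring.
  - replace (e mod 10)%Z with (5 + (e mod 10 - 5))%Z at 1 by lia.
    rewrite w_add. replace ((e mod 10) mod 5)%Z with (e mod 10 - 5)%Z.
    replace (w 5) with (RtoC (-1)). ring.
    unfold w. rewrite <- E2_half. f_equal. f_equal. field.
    symmetry. replace (e mod 10)%Z with ((e mod 10 - 5) + 1 * 5)%Z at 1 by lia.
    rewrite Z.mod_add by lia. apply Z.mod_small. lia.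
Qed.

Definition val (a : Z5) : C :=
  let '(a0, a1, a2, a3, a4) := a in
  Cplus (Cplus (Cplus (Cplus (Cmult (RtoC (IZR a0)) (w 0)) (Cmult (RtoC (IZR a1)) (w 1)))
    (Cmult (RtoC (IZR a2)) (w 2))) (Cmult (RtoC (IZR a3)) (w 3))) (Cmult (RtoC (IZR a4)) (w 4)).

Lemma val_addc a s e : val (addc a s e) = Cplus (val a) (Cmult (RtoC (IZR s)) (w e)).
Proof.
  rewrite (w_red e). unfold addc.
  assert (Hr : (0 <= (e mod 10) mod 5 < 5)%Z) by (apply Z.mod_pos_bound; lia).
  destruct a as [[[[a0 a1] a2] a3] a4].
  destruct (Z.ltb (e mod 10) 5);
  (assert (H : ((e mod 10) mod 5 = 0 \/ (e mod 10) mod 5 = 1 \/ (e mod 10) mod 5 = 2 \/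
          (e mod 10) mod 5 = 3 \/ (e mod 10) mod 5 = 4)%Z) by lia;
   destruct H as [H|[H|[H|[H|H]]]]; rewrite H; unfold val; rewrite ?plus_IZR, ?opp_IZR;
   unfold RtoC, Cplus, Cmult; simpl; f_equal; ring).
Qed.

Lemma val_coeffs l : val (coeffs l) = lsum l (fun se => Cmult (RtoC (IZR (fst se))) (w (snd se))).
Proof. induction l; simpl. unfold val; simpl. unfold RtoC, Cplus, Cmult; simpl. f_equal; ring.
  rewrite val_addc, IHl. ring. Qed.

Lemma w_pos : 0 < Re (w 1).
Proof. unfold w. rewrite E2_R. simpl. apply cos_gt_0; pose proof PI_RGT_0; lra. Qed.

Lemma cyclo : Cplus (Cplus (Cplus (Cplus (w 4) (Copp (w 3))) (w 2)) (Copp (w 1))) (RtoC 1) = RtoC 0.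
Proof.
  assert (Hk : forall k, w (Z.of_nat (S k)) = Cmult (w (Z.of_nat k)) (w 1)).
  { intros k. rewrite <- w_add. f_equal. lia. }
  assert (H0 : w 0 = RtoC 1). { unfold w. replace (IZR 0 / 10) with (INR 0) by (simpl; field). apply E2_nat. }
  assert (H2 : w 2 = Cmult (w 1) (w 1)) by (apply (Hk 1%nat)).
  assert (H3 : w 3 = Cmult (w 2) (w 1)) by (apply (Hk 2%nat)).
  assert (H4 : w 4 = Cmult (w 3) (w 1)) by (apply (Hk 3%nat)).
  assert (H5 : w 5 = Cmult (w 4) (w 1)) by (apply (Hk 4%nat)).
  assert (H5' : w 5 = RtoC (-1)). { unfold w. rewrite <- E2_half. f_equal. f_equal. field. }
  assert (Hne : Cplus (w 1) (RtoC 1) <> RtoC 0).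
  { intros E. pose proof w_pos. assert (E1 : Re (Cplus (w 1) (RtoC 1)) = Re (w 1) + 1) by reflexivity.
    rewrite E in E1. change (Re (RtoC 0)) with 0 in E1. lra. }
  set (u := w 1) in *. rewrite H4, H3, H2. rewrite H5', H4, H3, H2 in H5.
  set (Phi := (Cplus (Cplus (Cplus (Cplus (u * u * u * u) (Copp (u * u * u))) (u * u)) (Copp u)) (RtoC 1))%C).
  assert (E : Cmult (Cplus u (RtoC 1)) Phi = RtoC 0).
  { unfold Phi. transitivity (Cplus (u * u * u * u * u)%C (RtoC 1)). ring. rewrite <- H5. apply injective_projections; simpl; ring. }
  replace Phi with (Cmult (Cinv (Cplus u (RtoC 1))) (Cmult (Cplus u (RtoC 1)) Phi)).
  rewrite E. ring. field. auto.
Qed.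

Lemma val_zero a : okc a = true -> val a = RtoC 0.
Proof. destruct a as [[[[a0 a1] a2] a3] a4]. unfold okc. intros H.
  repeat rewrite Bool.andb_true_iff in H. destruct H as [[[H1 H2] H3] H4].
  apply Z.eqb_eq in H1, H2, H3, H4.
  replace a0 with a4 by lia. replace a1 with (- a4)%Z by lia. replace a2 with a4 by lia. replace a3 with (-a4)%Z by lia.
  unfold val. assert (H0 : w 0 = RtoC 1). { unfold w. replace (IZR 0 / 10) with (INR 0) by (simpl; field). apply E2_nat. }
  rewrite H0, opp_IZR. pose proof cyclo.
  transitivity (Cmult (RtoC (IZR a4)) (Cplus (Cplus (Cplus (Cplus (w 4) (Copp (w 3))) (w 2)) (Copp (w 1))) (RtoC 1))).
  unfold RtoC, Cplus, Cmult, Copp; simpl. f_equal; ring.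
  rewrite H. ring.
Qed.

Definition zs (M : nat) : list Z := map (fun k => (Z.of_nat k - Z.of_nat M)%Z) (seq 0 (2 * M + 1)).

Lemma in_zs M x : In x (zs M) <-> (- Z.of_nat M <= x <= Z.of_nat M)%Z.
Proof. unfold zs. rewrite in_map_iff. split.
  - intros (k & Ek & Hk). apply in_seq in Hk. lia.
  - intros H. exists (Z.to_nat (x + Z.of_nat M)). split. lia. apply in_seq. lia. Qed.

Lemma NoDup_zs M : NoDup (zs M).
Proof. unfold zs. apply FinFun.Injective_map_NoDup. intros a b E; lia. apply seq_NoDup. Qed.

Definition BoxW (M : nat) : list Z4 := list_prod (list_prod (list_prod (zs M) (zs M)) (zs M)) (zs M).

Definition inBW (M : nat) (x : Z4) : Prop :=
  let '(t, d, P, D) := x in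
  (- Z.of_nat M <= t <= Z.of_nat M /\ - Z.of_nat M <= d <= Z.of_nat M /\
   - Z.of_nat M <= P <= Z.of_nat M /\ - Z.of_nat M <= D <= Z.of_nat M)%Z.

Lemma in_BoxW M x : In x (BoxW M) <-> inBW M x.
Proof. destruct x as [[[t d] P] D]. unfold BoxW, inBW, Z4. rewrite !in_prod_iff, !in_zs. tauto. Qed.

Lemma NoDup_BoxW M : NoDup (BoxW M).
Proof. unfold BoxW, Z4. repeat apply NoDup_prod; apply NoDup_zs. Qed.

Definition Inv (g : Z4 -> Z4) := forall M (F : Z4 -> C), lsum (BoxW M) (fun x => F (g x)) = lsum (BoxW M) F.

Lemma inv_involution g : (forall x, g (g x) = x) -> (forall M x, inBW M x -> inBW M (g x)) -> Inv g.
Proof. intros Hg Hb M F. rewrite <- lsum_map. apply lsum_perm.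
  apply NoDup_Permutation.
  - apply FinFun.Injective_map_NoDup. red; intros a b E.
    rewrite <- (Hg a), <- (Hg b), E; auto. apply NoDup_BoxW.
  - apply NoDup_BoxW.
  - intros x. rewrite in_map_iff. split.
    + intros (y & <- & Hy). apply in_BoxW. apply Hb. apply in_BoxW; auto.
    + intros Hx. exists (g x). split; auto. apply in_BoxW. apply Hb. apply in_BoxW; auto.
Qed.

Definition tQ (x : Z4) : Z * Z := let '(t, d, P, D) := x in (t, (d * d + P * P + D * D)%Z).

Definition cong4 (x y : Z4) : Prop :=
  let '(t, d, P, D) := x in let '(t', d', P', D') := y in
  (t mod 10 = t' mod 10 /\ d mod 10 = d' mod 10 /\ P mod 10 = P' mod 10 /\ D mod 10 = D' mod 10)%Z.

Definition Good (g : Z4 -> Z4) : Prop :=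
  Inv g /\ (forall x, tQ (g x) = tQ x) /\ (forall x y, cong4 x y -> cong4 (g x) (g y)).

Lemma Good_comp a b : Good a -> Good b -> Good (fun x => a (b x)).
Proof. intros (Ia & Qa & Ca) (Ib & Qb & Cb). split; [|split].
  - intros M F. rewrite (Ib M (fun y => F (a y))). apply Ia.
  - intros x. rewrite Qa; auto.
  - intros x y H. auto.
Qed.

Lemma cong_opp a b : (a mod 10 = b mod 10 -> (- a) mod 10 = (- b) mod 10)%Z.
Proof. intros H. rewrite (Z.div_mod a 10), (Z.div_mod b 10) by lia. 
  rewrite !Z.opp_add_distr, <- !Z.mul_opp_r. rewrite !(Z.mul_comm 10).
  rewrite !Z.add_comm with (n := (- (a / 10) * 10)%Z), !Z.add_comm with (n := (- (b / 10) * 10)%Z).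
  rewrite !Z.mod_add by lia. rewrite H. auto. Qed.

Lemma Good_gen g : (forall x, g (g x) = x) -> (forall M x, inBW M x -> inBW M (g x)) ->
  (forall x, tQ (g x) = tQ x) -> (forall x y, cong4 x y -> cong4 (g x) (g y)) -> Good g.
Proof. intros; split; [apply inv_involution|split]; auto. Qed.

Ltac g4 := let x := fresh in intros x; destruct x as [[[? ?] ?] ?]; simpl.

Lemma Good_id : Good gid.
Proof. split; [|split]; intros; unfold gid; auto. intros M F; auto. Qed.

Lemma Good_fd : Good fd.
Proof. apply Good_gen.
  - g4. rewrite Z.opp_involutive; auto.
  - intros M [[[? ?] ?] ?]; simpl; lia.
  - g4. f_equal. ring.
  - intros [[[? ?] ?] ?] [[[? ?] ?] ?]; simpl. intuition. apply cong_opp; auto. Qed.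
Lemma Good_fP : Good fP.
Proof. apply Good_gen.
  - g4. rewrite Z.opp_involutive; auto.
  - intros M [[[? ?] ?] ?]; simpl; lia.
  - g4. f_equal. ring.
  - intros [[[? ?] ?] ?] [[[? ?] ?] ?]; simpl. intuition. apply cong_opp; auto. Qed.
Lemma Good_fD : Good fD.
Proof. apply Good_gen.
  - g4. rewrite Z.opp_involutive; auto.
  - intros M [[[? ?] ?] ?]; simpl; lia.
  - g4. f_equal. ring.
  - intros [[[? ?] ?] ?] [[[? ?] ?] ?]; simpl. intuition. apply cong_opp; auto. Qed.
Lemma Good_sdP : Good sdP.
Proof. apply Good_gen.
  - g4. auto.
  - intros M [[[? ?] ?] ?]; simpl; lia.
  - g4. f_equal. ring.
  - intros [[[? ?] ?] ?] [[[? ?] ?] ?]; simpl. intuition. Qed.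
Lemma Good_sdD : Good sdD.
Proof. apply Good_gen.
  - g4. auto.
  - intros M [[[? ?] ?] ?]; simpl; lia.
  - g4. f_equal. ring.
  - intros [[[? ?] ?] ?] [[[? ?] ?] ?]; simpl. intuition. Qed.
Lemma Good_sPD : Good sPD.
Proof. apply Good_gen.
  - g4. auto.
  - intros M [[[? ?] ?] ?]; simpl; lia.
  - g4. f_equal. ring.
  - intros [[[? ?] ?] ?] [[[? ?] ?] ?]; simpl. intuition. Qed.

Lemma Forall_compl (l1 l2 : list (Z4 -> Z4)) : List.Forall Good l1 -> List.Forall Good l2 -> List.Forall Good (compl l1 l2).
Proof. intros H1 H2. unfold compl. apply List.Forall_forall. intros g Hg.
  apply in_flat_map in Hg. destruct Hg as (a & Ha & Hg). apply in_map_iff in Hg.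
  destruct Hg as (b & <- & Hb). apply Good_comp. eapply List.Forall_forall in H1; eauto. eapply List.Forall_forall in H2; eauto. Qed.

Lemma Good_gs : List.Forall Good gs.
Proof. unfold gs. repeat apply Forall_compl; repeat (apply List.Forall_cons;
  [auto using Good_id, Good_fd, Good_fP, Good_fD, Good_sdP, Good_sdD, Good_sPD|]); apply List.Forall_nil. Qed.

Lemma length_gs : length gs = 48%nat.
Proof. reflexivity. Qed.

Lemma lsum_gl (l : list (Z4 -> Z4)) M F : List.Forall Good l ->
  lsum (BoxW M) (fun x => lsum l (fun g => F (g x))) = Cmult (RtoC (INR (length l))) (lsum (BoxW M) F).
Proof. intros H. rewrite lsum_comm. induction l as [|g l IH]. simpl. ring.
  inversion H; subst. simpl length. rewrite S_INR. simpl lsum. rewrite IH by auto. destruct H2 as [Hi _]. rewrite Hi.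
  apply injective_projections; simpl; ring. Qed.

Lemma lsum_gs M F : lsum (BoxW M) (fun x => lsum gs (fun g => F (g x))) = Cmult (RtoC 48) (lsum (BoxW M) F).
Proof. rewrite lsum_gl by apply Good_gs. rewrite length_gs. f_equal. f_equal. simpl. ring. Qed.

Section Core.
Variables (zeta tau : C) (kap : Z) (data : list pd).

Definition thA (c : Z) (n : Z) : C := theta_term 1 (IZR c / 5) (RtoC 0) tau n.
Definition thF (k : Z) (m : Z) : C := theta_term (1/5) (IZR k / 5) zeta tau m.
Definition coefC (p : pd) : C := Cmult (RtoC (IZR (sg p))) (w (ex p)).

Definition prodT (p : pd) (n : Z4) : C :=
  let '(n1, n2, m1, m2) := n in
  Cmult (Cmult (Cmult (Cmult (coefC p) (thA (c1 p) n1)) (thA (c2 p) n2)) (thF (k1 p) m1)) (thF (k2 p) m2).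

Definition psi (n : Z4) : Z4 :=
  let '(n1, n2, m1, m2) := n in ((m1 + m2)%Z, (m1 - m2)%Z, (n1 + n2 + 1)%Z, (n1 - n2)%Z).

Definition Wq (tq : Z * Z) : C :=
  let '(t, q) := tq in
  E2 (Cplus (Cmult (RtoC (((IZR t + 1/5) * (IZR t + 1/5) + IZR q) / 4)) tau) (Cmult (RtoC (IZR t + 1/5)) zeta)).

Definition K0 : C := E2 (RtoC (IZR kap / 100)).

Lemma even_half a : Z.even a = true -> a = (2 * (a / 2))%Z.
Proof. intros H. apply Z.even_spec in H. destruct H as [m Hm]. subst. rewrite Z.mul_comm, Z.div_mul by lia. ring. Qed.

Lemma theta_term_E2 eps eps' z t n : theta_term eps eps' z t n =
  E2 (Cplus (Cmult (Cmult (RtoC (1/2)) (Cmult (RtoC (IZR n + eps / 2)) (RtoC (IZR n + eps / 2)))) t)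
          (Cmult (RtoC (IZR n + eps / 2)) (Cplus z (RtoC (eps' / 2))))).
Proof. reflexivity. Qed.

Lemma E2_5 s a b c d e : Cmult (Cmult (Cmult (Cmult (Cmult s (E2 a)) (E2 b)) (E2 c)) (E2 d)) (E2 e)
  = Cmult s (E2 (Cplus (Cplus (Cplus (Cplus a b) c) d) e)).
Proof. rewrite !E2_add. ring. Qed.

Lemma E2_3 s a b c : Cmult (Cmult (E2 a) (E2 b)) (Cmult s (E2 c)) = Cmult s (E2 (Cplus (Cplus a b) c)).
Proof. rewrite !E2_add. ring. Qed.

Lemma prodT_eq p n : validp kap p = true ->
  prodT p n = Cmult (Cmult K0 (Wq (tQ (psi n)))) (Cmult (RtoC (IZR (sg p))) (w (Eexp kap p (psi n)))).
Proof.
  intros Hv. unfold validp in Hv. repeat rewrite Bool.andb_true_iff in Hv.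
  destruct Hv as [[[[H1 H2] H3] H4] H5].
  apply even_half in H1, H2, H3, H4. apply Z.eqb_eq in H5.
  assert (H5' : (k1 p + k2 p - kap = 10 * ((k1 p + k2 p - kap) / 10))%Z).
  { rewrite (Z.div_mod (k1 p + k2 p - kap) 10) at 1 by lia. rewrite H5. ring. }
  destruct n as [[[n1 n2] m1] m2]. unfold prodT, psi, tQ, Eexp, Wq, coefC, thA, thF, K0, w.
  rewrite !theta_term_E2. rewrite E2_5, E2_3. f_equal. f_equal.
  set (al := ((c1 p + c2 p) / 2)%Z) in *. set (be := ((c1 p - c2 p) / 2)%Z) in *.
  set (ga := ((k1 p + k2 p) / 2)%Z) in *. set (de := ((k1 p - k2 p) / 2)%Z) in *.
  set (la := ((k1 p + k2 p - kap) / 10)%Z) in *.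
  apply (f_equal IZR) in H1, H2, H3, H4, H5'. rewrite plus_IZR in H1, H3. rewrite minus_IZR in H2, H4. rewrite !minus_IZR, plus_IZR in H5'. rewrite mult_IZR in H1, H2, H3, H4, H5'.
  rewrite ?plus_IZR, ?minus_IZR, ?mult_IZR.
  destruct tau as [tr ti], zeta as [zr' zi]. apply injective_projections; simpl.
  - apply Rmult_eq_reg_l with 100. 2: lra.
    replace (IZR al) with ((IZR (c1 p) + IZR (c2 p)) / 2) by lra.
    replace (IZR be) with ((IZR (c1 p) - IZR (c2 p)) / 2) by lra.
    replace (IZR ga) with ((IZR (k1 p) + IZR (k2 p)) / 2) by lra.
    replace (IZR de) with ((IZR (k1 p) - IZR (k2 p)) / 2) by lra.
    replace (IZR la) with ((IZR (k1 p) + IZR (k2 p) - IZR kap) / 10) by lra.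
    rewrite ?plus_IZR, ?minus_IZR, ?mult_IZR. field.
  - rewrite ?plus_IZR, ?minus_IZR, ?mult_IZR. field.
Qed.


Definition Htil (x : Z4) : C :=
  if condb x then Cmult (Cmult K0 (Wq (tQ x))) (lsum data (fun p => Cmult (RtoC (IZR (sg p))) (w (Eexp kap p x))))
  else RtoC 0.

Lemma Htil_gs x : lsum gs (fun g => Htil (g x)) = Cmult (Cmult K0 (Wq (tQ x))) (val (coeffs (terms kap data x))).
Proof.
  rewrite val_coeffs. unfold terms. rewrite lsum_flat_map. rewrite <- lsum_scal.
  apply lsum_ext. intros g Hg. assert (Hgood : Good g) by (eapply List.Forall_forall; [apply Good_gs|auto]).
  destruct Hgood as (_ & HQ & _). unfold Htil. rewrite HQ. destruct (condb (g x)); simpl.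
  - rewrite lsum_map. simpl. auto.
  - ring.
Qed.

Definition tmod (l : list (Z * Z)) : list (Z * Z) := map (fun se => (fst se, (snd se mod 10)%Z)) l.

Lemma coeffs_tmod l : coeffs (tmod l) = coeffs l.
Proof. induction l as [|[s e] l IH]; simpl; auto. rewrite IH. unfold addc. rewrite Z.mod_mod by lia. auto. Qed.

Lemma map_flat_map' {A B C'} (h : B -> C') (f : A -> list B) l :
  map h (flat_map f l) = flat_map (fun a => map h (f a)) l.
Proof. induction l; simpl; auto. rewrite map_app, IHl. auto. Qed.

Lemma flat_map_ext_in {A B} (f f' : A -> list B) l : (forall a, In a l -> f a = f' a) -> flat_map f l = flat_map f' l.
Proof. induction l; simpl; intros H; auto. rewrite H, IHl; auto. Qed.

Lemma mod_eq_ex a b : (a mod 10 = b mod 10)%Z -> a = (b + 10 * ((a - b) / 10))%Z.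
Proof. intros.
 pose proof (Z.div_mod a 10) as Ha. pose proof (Z.div_mod b 10) as Hb. pose proof (Z.div_mod (a-b) 10) as Hc.
 pose proof (Z.mod_pos_bound (a-b) 10). pose proof (Z.mod_pos_bound a 10). pose proof (Z.mod_pos_bound b 10). lia. Qed.

Lemma odd_shift b k : Z.odd (b + 10 * k) = Z.odd b.
Proof. replace (b + 10 * k)%Z with (b + 2 * (5 * k))%Z by ring.
  rewrite Z.odd_add, Z.odd_mul. simpl. rewrite Bool.xorb_false_r. auto. Qed.

Lemma even_shift b k : Z.even (b + 10 * k) = Z.even b.
Proof. rewrite <- !Z.negb_odd, odd_shift. auto. Qed.

Lemma condb_cong x y : cong4 x y -> condb x = condb y.
Proof. destruct x as [[[t d] P] D], y as [[[t' d'] P'] D']. simpl. intros (H1 & H2 & H3 & H4).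
  apply mod_eq_ex in H1, H2, H3, H4. rewrite H1, H2, H3, H4.
  replace (P' + 10 * ((P - P') / 10) + (D' + 10 * ((D - D') / 10)))%Z with
    (P' + D' + 10 * ((P - P') / 10 + (D - D') / 10))%Z by ring.
  replace (d' + 10 * ((d - d') / 10) - (t' + 10 * ((t - t') / 10)))%Z with
    (d' - t' + 10 * ((d - d') / 10 - (t - t') / 10))%Z by ring.
  rewrite odd_shift, even_shift. auto. Qed.

Lemma Eexp_cong p x y : cong4 x y -> (Eexp kap p x mod 10 = Eexp kap p y mod 10)%Z.
Proof. destruct x as [[[t d] P] D], y as [[[t' d'] P'] D']. simpl. intros (H1 & H2 & H3 & H4).
  assert (Et := mod_eq_ex _ _ H1). assert (Ed := mod_eq_ex _ _ H2).
  assert (EP := mod_eq_ex _ _ H3). assert (ED := mod_eq_ex _ _ H4).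
  set (a := ((t - t') / 10)%Z) in *. set (b := ((d - d') / 10)%Z) in *.
  set (c := ((P - P') / 10)%Z) in *. set (e := ((D - D') / 10)%Z) in *.
  rewrite Et, Ed, EP, ED.
  set (al := ((c1 p + c2 p) / 2)%Z). set (be := ((c1 p - c2 p) / 2)%Z).
  set (ga := ((k1 p + k2 p) / 2)%Z). set (de := ((k1 p - k2 p) / 2)%Z).
  set (la := ((k1 p + k2 p - kap) / 10)%Z).
  match goal with |- (?L mod 10 = ?R mod 10)%Z =>
    replace L with (R + (al * c + be * e + ga * a + de * b) * 10)%Z by ring end.
  apply Z.mod_add. lia. Qed.

Definition xmod (x : Z4) : Z4 := let '(t, d, P, D) := x in ((t mod 10)%Z, (d mod 10)%Z, (P mod 10)%Z, (D mod 10)%Z).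

Lemma cong_xmod x : cong4 x (xmod x).
Proof. destruct x as [[[t d] P] D]. simpl. rewrite !Z.mod_mod by lia. auto. Qed.

Lemma terms_period x y : cong4 x y -> tmod (terms kap data x) = tmod (terms kap data y).
Proof. intros H. unfold tmod, terms. rewrite !map_flat_map'. apply flat_map_ext_in.
  intros g Hg. assert (Hgood : Good g) by (eapply List.Forall_forall; [apply Good_gs|auto]).
  destruct Hgood as (_ & _ & HC). specialize (HC x y H).
  rewrite (condb_cong _ _ HC). destruct (condb (g y)); auto.
  rewrite !map_map. apply map_ext. intros p. simpl. rewrite (Eexp_cong p _ _ HC). auto. Qed.

Lemma in_r10 z : (0 <= z < 10)%Z -> In z r10.
Proof. intros H. unfold r10. apply in_map_iff. exists (Z.to_nat z). split. lia. apply in_seq. lia. Qed.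

Lemma check_all x : check kap data = true -> okc (coeffs (terms kap data x)) = true.
Proof. intros Hc. unfold check in Hc. rewrite forallb_forall in Hc.
  rewrite <- coeffs_tmod, (terms_period x (xmod x) (cong_xmod x)), coeffs_tmod.
  apply Hc. destruct x as [[[t d] P] D]. unfold xmod, box10, Z4.
  repeat apply in_prod; apply in_r10; apply Z.mod_pos_bound; lia. Qed.

Lemma BoxW_zero M : check kap data = true -> lsum (BoxW M) Htil = RtoC 0.
Proof. intros Hc.
  assert (H : Cmult (RtoC 48) (lsum (BoxW M) Htil) = RtoC 0).
  { rewrite <- lsum_gs. apply lsum_zero. intros x _. rewrite Htil_gs, val_zero by (apply check_all; auto). ring. }
  assert (Hn : RtoC 48 <> RtoC 0). { intros E. injection E. lra. }
  replace (lsum (BoxW M) Htil) with (Cmult (Cinv (RtoC 48)) (Cmult (RtoC 48) (lsum (BoxW M) Htil))).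
  rewrite H. ring. field. Qed.

Lemma in_zr M z : In z (zr M) <-> (- Z.of_nat M - 1 <= z <= Z.of_nat M)%Z.
Proof. unfold zr. rewrite in_app_iff, !in_map_iff. split.
  - intros [(k & <- & Hk)|(k & <- & Hk)]; apply in_seq in Hk; lia.
  - intros H. destruct (Z_le_gt_dec 0 z).
    + left. exists (Z.to_nat z). split. lia. apply in_seq. lia.
    + right. exists (Z.to_nat (- z - 1)). split. lia. apply in_seq. lia. Qed.

Lemma NoDup_zr M : NoDup (zr M).
Proof. unfold zr. apply NoDup_app.
  - apply FinFun.Injective_map_NoDup. red; intros; lia. apply seq_NoDup.
  - apply FinFun.Injective_map_NoDup. red; intros; lia. apply seq_NoDup.
  - intros a Ha Hb. apply in_map_iff in Ha, Hb. destruct Ha as (x & <- & _), Hb as (y & E & _). lia. Qed.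

Lemma NoDup_box M : NoDup (box M).
Proof. unfold box, Z4. repeat apply NoDup_prod; apply NoDup_zr. Qed.

Lemma in_box M n : In n (box M) <-> let '(a, b, c, d) := n in
  (In a (zr M) /\ In b (zr M) /\ In c (zr M) /\ In d (zr M)).
Proof. destruct n as [[[a b] c] d]. unfold box, Z4. rewrite !in_prod_iff. tauto. Qed.

Definition inBWb (M : nat) (x : Z4) : bool :=
  let '(t, d, P, D) := x in let m := Z.of_nat M in
  ((- m <=? t) && (t <=? m) && (- m <=? d) && (d <=? m) && (- m <=? P) && (P <=? m) && (- m <=? D) && (D <=? m))%Z%bool.

Lemma inBWb_spec M x : inBWb M x = true <-> inBW M x.
Proof. destruct x as [[[t d] P] D]. unfold inBWb, inBW. repeat rewrite Bool.andb_true_iff.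
  repeat rewrite Z.leb_le. tauto. Qed.

Definition psi_inv (x : Z4) : Z4 :=
  let '(t, d, P, D) := x in (((P + D - 1) / 2)%Z, ((P - D - 1) / 2)%Z, ((t + d) / 2)%Z, ((t - d) / 2)%Z).

Lemma half_eq a k : a = (2 * k)%Z -> (a / 2 = k)%Z.
Proof. intros ->. rewrite Z.mul_comm, Z.div_mul; lia. Qed.

Lemma condb_psi n : condb (psi n) = true.
Proof. destruct n as [[[n1 n2] m1] m2]. simpl.
  replace (n1 + n2 + 1 + (n1 - n2))%Z with (2 * n1 + 1)%Z by ring.
  replace (m1 - m2 - (m1 + m2))%Z with (2 * (- m2))%Z by ring.
  rewrite Z.odd_add, Z.odd_mul, Z.even_mul. auto. Qed.

Lemma psi_psi_inv x : condb x = true -> psi (psi_inv x) = x.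
Proof. destruct x as [[[t d] P] D]. simpl. intros H. apply Bool.andb_true_iff in H. destruct H as [H1 H2].
  apply Z.odd_spec in H1. apply Z.even_spec in H2. destruct H1 as [k Hk]. destruct H2 as [j Hj].
  rewrite (half_eq (P + D - 1) k) by lia. rewrite (half_eq (P - D - 1) (k - D)) by lia.
  rewrite (half_eq (t + d) (t + j)) by lia. rewrite (half_eq (t - d) (- j)) by lia.
  f_equal; [f_equal; [f_equal|]|]; lia. Qed.

Lemma reindex M : lsum (filter (fun n => inBWb M (psi n)) (box M)) (fun n => Htil (psi n)) = lsum (BoxW M) Htil.
Proof.
  rewrite <- (lsum_map psi). rewrite (lsum_filter condb (BoxW M)).
  rewrite (lsum_zero (filter (fun x => negb (condb x)) (BoxW M))).
  2:{ intros x Hx. apply filter_In in Hx. destruct Hx as [_ Hx]. unfold Htil. destruct (condb x); auto. discriminate. }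
  rewrite Cplus_0_r. apply lsum_perm. apply NoDup_Permutation.
  - apply FinFun.Injective_map_NoDup. 2: apply NoDup_filter, NoDup_box.
    red. intros [[[a b] c] d] [[[a' b'] c'] d'] E. simpl in E. injection E. intros. f_equal; [f_equal; [f_equal|]|]; lia.
  - apply NoDup_filter, NoDup_BoxW.
  - intros x. rewrite in_map_iff, filter_In. split.
    + intros (n & <- & Hn). apply filter_In in Hn. destruct Hn as [_ Hn]. split.
      apply in_BoxW, inBWb_spec; auto. apply condb_psi.
    + intros [Hx Hc]. exists (psi_inv x). pose proof (psi_psi_inv x Hc) as E. split; auto.
      apply filter_In. rewrite E. split. 2: apply inBWb_spec, in_BoxW; auto.
      apply in_BoxW in Hx. apply in_box. destruct x as [[[t d] P] D]. simpl in Hx.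
      destruct (psi_inv (t, d, P, D)) as [[[n1 n2] m1] m2]. simpl in E. injection E. intros. rewrite !in_zr. lia.
Qed.

Definition Hsum (n : Z4) : C := lsum data (fun p => prodT p n).

Lemma Hsum_Htil n : (forall p, In p data -> validp kap p = true) -> Hsum n = Htil (psi n).
Proof. intros Hv. unfold Hsum, Htil. rewrite condb_psi. rewrite <- lsum_scal.
  apply lsum_ext. intros p Hp. apply prodT_eq. auto. Qed.

End Core.

Definition q2 : R := exp (- (1/2)).

Lemma q2_pos : 0 < q2. Proof. apply exp_pos. Qed.
Lemma q2_lt1 : q2 < 1. Proof. unfold q2. assert (H : exp (- (1/2)) < exp 0) by (apply exp_increasing; lra). rewrite exp_0 in H. exact H. Qed.

Lemma exp_half_pow m : exp (- (INR m / 2)) = q2 ^ m.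
Proof. induction m. simpl. replace (- (0/2)) with 0 by field. apply exp_0.
  rewrite S_INR. replace (- ((INR m + 1) / 2)) with (- (INR m / 2) + - (1/2)) by field.
  rewrite exp_plus, IHm. simpl. unfold q2. ring. Qed.

Lemma rsum_geom a k : rsum (seq a k) (fun m => q2 ^ m) <= q2 ^ a / (1 - q2).
Proof. pose proof q2_pos; pose proof q2_lt1.
  revert a. induction k; intros a; simpl.
  - apply Rmult_le_pos. apply pow_le; lra. left; apply Rinv_0_lt_compat; lra.
  - specialize (IHk (S a)). simpl in IHk.
    apply Rle_trans with (q2 ^ a + q2 * q2 ^ a / (1 - q2)). lra.
    right. field. lra. Qed.

Definition Gb : R := 2 / (1 - q2).

Lemma rsum_zr_bound M : rsum (zr M) (fun n => exp (- (Rabs (IZR n) / 2))) <= Gb.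
Proof. pose proof q2_pos; pose proof q2_lt1. unfold zr, Gb. rewrite rsum_app, !rsum_map.
  assert (H1 : rsum (seq 0 (S M)) (fun m => exp (- (Rabs (IZR (Z.of_nat m)) / 2))) <= 1 / (1 - q2)).
  { rewrite (rsum_ext _ _ (fun m => q2 ^ m)). replace (1 / (1 - q2)) with (q2 ^ 0 / (1 - q2)) by (simpl; field; lra).
    apply rsum_geom. intros m _. rewrite Rabs_IZR_pos. apply exp_half_pow. }
  assert (H2 : rsum (seq 0 (S M)) (fun m => exp (- (Rabs (IZR (- Z.of_nat m - 1)) / 2))) <= 1 / (1 - q2)).
  { eapply Rle_trans. 2: eapply Rle_trans; [apply (rsum_geom 0 (S M))|simpl; right; field; lra].
    apply rsum_le. intros m _. rewrite Rabs_IZR_neg. rewrite <- exp_half_pow. apply exp_le_exp. lra. }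
  replace (2 / (1 - q2)) with (1 / (1 - q2) + 1 / (1 - q2)) by (field; lra). lra. Qed.

Lemma rsum_zr_nonneg M : 0 <= rsum (zr M) (fun n => exp (- (Rabs (IZR n) / 2))).
Proof. apply rsum_nonneg. intros; left; apply exp_pos. Qed.

Lemma Cmod_w e : Cmod (w e) = 1.
Proof. unfold w. rewrite E2_R. unfold Cmod; cbn [fst snd]. set (a := 2 * PI * (IZR e / 10)).
  replace (cos a ^ 2 + sin a ^ 2) with 1. apply sqrt_1. rewrite <- (sin2_cos2 a). unfold Rsqr. ring. Qed.

Definition Ez (z : Z) : R := exp (- (Rabs (IZR z) / 2)).

Lemma prod_bound K (M : nat) a b c d x1 x2 x3 x4 : 0 < K ->
  Cmod x1 <= K * exp (- Rabs (IZR a)) -> Cmod x2 <= K * exp (- Rabs (IZR b)) ->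
  Cmod x3 <= K * exp (- Rabs (IZR c)) -> Cmod x4 <= K * exp (- Rabs (IZR d)) ->
  INR M <= Rabs (IZR a) + Rabs (IZR b) + Rabs (IZR c) + Rabs (IZR d) ->
  Cmod (Cmult (Cmult (Cmult x1 x2) x3) x4) <= K ^ 4 * q2 ^ M * (Ez a * Ez b * Ez c * Ez d).
Proof. intros HK H1 H2 H3 H4 HM. rewrite !Cmod_mult.
  assert (B : Cmod x1 * Cmod x2 * Cmod x3 * Cmod x4 <=
     (K * exp (- Rabs (IZR a))) * (K * exp (- Rabs (IZR b))) * (K * exp (- Rabs (IZR c))) * (K * exp (- Rabs (IZR d)))).
  { pose proof (Cmod_ge_0 x1). pose proof (Cmod_ge_0 x2). pose proof (Cmod_ge_0 x3). pose proof (Cmod_ge_0 x4).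
    apply Rmult_le_compat; try apply Rmult_le_pos; try apply Rmult_le_pos; auto.
    apply Rmult_le_compat; try apply Rmult_le_pos; auto.
    apply Rmult_le_compat; auto. }
  eapply Rle_trans. apply B. clear B.
  set (s := Rabs (IZR a) + Rabs (IZR b) + Rabs (IZR c) + Rabs (IZR d)).
  replace (K * exp (- Rabs (IZR a)) * (K * exp (- Rabs (IZR b))) * (K * exp (- Rabs (IZR c))) * (K * exp (- Rabs (IZR d))))
    with (K ^ 4 * (exp (- (s / 2)) * exp (- (s / 2)))).
  2:{ rewrite <- exp_plus. unfold s. replace (- ((Rabs (IZR a) + Rabs (IZR b) + Rabs (IZR c) + Rabs (IZR d)) / 2) +
      - ((Rabs (IZR a) + Rabs (IZR b) + Rabs (IZR c) + Rabs (IZR d)) / 2)) with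
      (- Rabs (IZR a) + (- Rabs (IZR b) + (- Rabs (IZR c) + - Rabs (IZR d)))) by field.
      rewrite !exp_plus. ring. }
  replace (Ez a * Ez b * Ez c * Ez d) with (exp (- (s / 2))).
  2:{ unfold Ez, s. rewrite <- !exp_plus. f_equal. field. }
  rewrite Rmult_assoc. apply Rmult_le_compat_l. apply pow_le; lra.
  rewrite <- exp_half_pow. apply Rmult_le_compat_r. left; apply exp_pos. apply exp_le_exp. unfold s. lra.
Qed.

Lemma outside_big M a b c d : inBW M (psi (a, b, c, d)) -> False \/ True.
Proof. auto. Qed.

Lemma outside_sum M a b c d : ~ inBW M (psi (a, b, c, d)) ->
  INR M <= Rabs (IZR a) + Rabs (IZR b) + Rabs (IZR c) + Rabs (IZR d).
Proof. intros H. simpl in H.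
  assert (Hz : (Z.of_nat M <= Z.abs a + Z.abs b + Z.abs c + Z.abs d)%Z) by lia.
  rewrite <- !abs_IZR, INR_IZR_INZ, <- !plus_IZR. apply IZR_le. exact Hz. Qed.

Definition thc (tau : C) (c : Z) : C := theta_const 1 (IZR c / 5) tau.
Definition ff (zeta tau : C) (k : Z) : C := theta (1/5) (IZR k / 5) zeta tau.

Lemma thc_Zsum tau c : thc tau c = Zsum (thA tau c). Proof. reflexivity. Qed.
Lemma ff_Zsum zeta tau k : ff zeta tau k = Zsum (thF zeta tau k). Proof. reflexivity. Qed.

Theorem gen_identity zeta tau kap data : 0 < Im tau ->
  (forall p, In p data -> validp kap p = true) -> check kap data = true ->
  lsum data (fun p => Cmult (coefC p) (Cmult (Cmult (Cmult (thc tau (c1 p)) (thc tau (c2 p)))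
     (ff zeta tau (k1 p))) (ff zeta tau (k2 p)))) = RtoC 0.
Proof.
  intros Hy Hv Hc.
  set (K := Rmax (Kb (RtoC 0) tau) (Kb zeta tau)).
  assert (HK : 0 < K). { unfold K. eapply Rlt_le_trans. 2: apply Rmax_l. unfold Kb. apply exp_pos. }
  assert (HA : forall c n, Cmod (thA tau c n) <= K * exp (- Rabs (IZR n))).
  { intros c n. eapply Rle_trans. apply theta_term_bound; auto. rewrite Rabs_R1; lra.
    apply Rmult_le_compat_r. left; apply exp_pos. apply Rmax_l. }
  assert (HF : forall k n, Cmod (thF zeta tau k n) <= K * exp (- Rabs (IZR n))).
  { intros k n. eapply Rle_trans. apply theta_term_bound; auto. rewrite Rabs_right; lra.
    apply Rmult_le_compat_r. left; apply exp_pos. apply Rmax_r. }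
  apply (Clim_unique (fun M => lsum (box M) (Hsum zeta tau data))).
  -
    apply Clim_ext with (fun M => lsum data (fun p => Cmult (coefC p)
        (Cmult (Cmult (Cmult (lsum (zr M) (thA tau (c1 p))) (lsum (zr M) (thA tau (c2 p))))
          (lsum (zr M) (thF zeta tau (k1 p)))) (lsum (zr M) (thF zeta tau (k2 p)))))).
    + intros M. unfold Hsum. rewrite lsum_comm. apply lsum_ext. intros p _.
      rewrite (lsum_ext (box M) (fun n => prodT zeta tau p n) (fun x => match x with (a, b, c, d) =>
        Cmult (Cmult (Cmult ((fun a => Cmult (coefC p) (thA tau (c1 p) a)) a) (thA tau (c2 p) b)) (thF zeta tau (k1 p) c)) (thF zeta tau (k2 p) d) end)).
      rewrite lsum_box. rewrite lsum_scal. ring.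
      intros [[[a b] c] d] _. reflexivity.
    + apply Clim_lsum. intros p _. apply Clim_mult. apply Clim_const. 
      rewrite !thc_Zsum, !ff_Zsum. 
      apply Clim_mult; [apply Clim_mult; [apply Clim_mult|]|].
      * exact (Zsum_lim _ K HK (HA (c1 p))).
      * exact (Zsum_lim _ K HK (HA (c2 p))).
      * exact (Zsum_lim _ K HK (HF (k1 p))).
      * exact (Zsum_lim _ K HK (HF (k2 p))).
  - set (S := rsum data (fun p => Rabs (IZR (sg p)))).
    assert (HS : 0 <= S). { apply rsum_nonneg. intros; apply Rabs_pos. }
    apply Clim_zero with (fun M => S * K ^ 4 * q2 ^ M * Gb ^ 4).
    + intros M. rewrite (lsum_filter (fun n => inBWb M (psi n)) (box M)).
      rewrite (lsum_ext (filter _ (box M)) (Hsum zeta tau data) (fun n => Htil zeta tau kap data (psi n))).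
      2:{ intros n _. apply Hsum_Htil. auto. }
      rewrite reindex, BoxW_zero by auto. rewrite Cplus_0_l.
      eapply Rle_trans. apply Cmod_lsum.
      set (G4 := fun x : Z4 => match x with (a, b, c, d) => Ez a * Ez b * Ez c * Ez d end).
      apply Rle_trans with (rsum (filter (fun n => negb (inBWb M (psi n))) (box M)) (fun n => S * K ^ 4 * q2 ^ M * G4 n)).
      { apply rsum_le. intros [[[a b] c] d] Hn. apply filter_In in Hn. destruct Hn as [_ Hn].
        assert (Hout : ~ inBW M (psi (a, b, c, d))). { intros Hi. apply inBWb_spec in Hi. rewrite Hi in Hn. discriminate. }
        apply outside_sum in Hout.
        unfold Hsum. eapply Rle_trans. apply Cmod_lsum.
        replace (S * K ^ 4 * q2 ^ M * G4 (a, b, c, d)) with (rsum data (fun p => Rabs (IZR (sg p)) * (K ^ 4 * q2 ^ M * G4 (a, b, c, d)))).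
        2:{ rewrite rsum_const_mult. unfold S. ring. }
        apply rsum_le. intros p _. unfold prodT.
        replace (Cmult (Cmult (Cmult (Cmult (coefC p) (thA tau (c1 p) a)) (thA tau (c2 p) b)) (thF zeta tau (k1 p) c)) (thF zeta tau (k2 p) d))
          with (Cmult (coefC p) (Cmult (Cmult (Cmult (thA tau (c1 p) a) (thA tau (c2 p) b)) (thF zeta tau (k1 p) c)) (thF zeta tau (k2 p) d))) by ring.
        rewrite Cmod_mult. unfold coefC. rewrite Cmod_mult, Cmod_R, Cmod_w, Rmult_1_r.
        apply Rmult_le_compat_l. apply Rabs_pos. apply prod_bound; auto. }
      eapply Rle_trans. apply rsum_filter_le.
      { intros x _. apply Rmult_le_pos. apply Rmult_le_pos. apply Rmult_le_pos. auto. apply pow_le; lra.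
        apply pow_le; left; apply q2_pos.
        destruct x as [[[a b] c] d]; unfold G4, Ez; repeat apply Rmult_le_pos; left; apply exp_pos. }
      rewrite rsum_scal.
      assert (Hc0 : 0 <= S * K ^ 4 * q2 ^ M).
      { apply Rmult_le_pos. apply Rmult_le_pos. auto. apply pow_le; lra. apply pow_le; left; apply q2_pos. }
      apply Rmult_le_compat_l; auto.
      assert (RB : rsum (box M) G4 = rsum (zr M) Ez * rsum (zr M) Ez * rsum (zr M) Ez * rsum (zr M) Ez).
      { unfold G4. apply (rsum_box M Ez Ez Ez Ez). }
      rewrite RB.
      pose proof (rsum_zr_bound M) as GB. pose proof (rsum_zr_nonneg M) as GN.
      change (fun n : Z => exp (- (Rabs (IZR n) / 2))) with Ez in GB, GN.
      set (g := rsum (zr M) Ez) in *.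
      simpl. rewrite Rmult_1_r.
      assert (g * g <= Gb * Gb) by (apply Rmult_le_compat; auto).
      assert (g * g * g <= Gb * Gb * Gb) by (apply Rmult_le_compat; auto; apply Rmult_le_pos; auto).
      replace (Gb * (Gb * (Gb * Gb))) with (Gb * Gb * Gb * Gb) by ring.
      apply Rmult_le_compat; auto; repeat apply Rmult_le_pos; auto.
    + apply (is_lim_seq_ext (fun M => (S * K ^ 4 * Gb ^ 4) * q2 ^ M)). intros M; ring.
      replace (Finite 0) with (Rbar_mult (S * K ^ 4 * Gb ^ 4) 0) by (simpl; f_equal; ring).
      apply is_lim_seq_scal_l. apply is_lim_seq_geom. pose proof q2_pos; pose proof q2_lt1.
      rewrite Rabs_right; lra.
Qed.
Lemma check1 : check 0 data1 = true. Proof. vm_compute. reflexivity. Qed.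
Lemma check2 : check 2 data2 = true. Proof. vm_compute. reflexivity. Qed.
Lemma check3 : check 4 data3 = true. Proof. vm_compute. reflexivity. Qed.
Lemma check4 : check 6 data4 = true. Proof. vm_compute. reflexivity. Qed.
Lemma check5 : check 8 data5 = true. Proof. vm_compute. reflexivity. Qed.

Lemma valid_all kap data : forallb (validp kap) data = true -> forall p, In p data -> validp kap p = true.
Proof. rewrite forallb_forall. auto. Qed.

Lemma w0 : w 0 = RtoC 1.
Proof. unfold w. replace (IZR 0 / 10) with (INR 0) by (simpl; field). apply E2_nat. Qed.

Lemma z2_w4 : Cmult zeta5 zeta5 = w 4.
Proof. unfold zeta5. rewrite <- cexp_add. unfold w, E2. f_equal.
  apply injective_projections; simpl; field. Qed.

Theorem proposition6p3 :
  forall (zeta tau : C), 0 < Im tau ->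
  let A := theta_const 1 (1/5) tau in
  let B := theta_const 1 (3/5) tau in
  let f := fun k : R => theta (1/5) (k/5) zeta tau in
  let z2 := Cmult zeta5 zeta5 in
  (B*B*f 1*f 9 - A*A*f 3*f 7 + A*B*f 5*f 5 = 0)%C /\
  (z2*A*A*f 3*f 9 - z2*B*B*f 5*f 7 + A*B*f 1*f 1 = 0)%C /\
  (B*B*f 1*f 3 + z2*A*A*f 5*f 9 - z2*A*B*f 7*f 7 = 0)%C /\
  (A*A*f 1*f 5 + z2*B*B*f 7*f 9 - A*B*f 3*f 3 = 0)%C /\
  (A*A*f 1*f 7 - B*B*f 3*f 5 + z2*A*B*f 9*f 9 = 0)%C.
Proof.
  intros zeta tau Hy A B f z2.
  assert (EA : A = thc tau 1) by reflexivity.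
  assert (EB : B = thc tau 3) by reflexivity.
  assert (Ef : forall k, f (IZR k) = ff zeta tau k) by reflexivity.
  assert (Ez : z2 = w 4) by apply z2_w4.
  clearbody A B f z2.
  rewrite EA, EB, Ez. rewrite !Ef.
  pose proof (gen_identity zeta tau 0 data1 Hy (valid_all 0 data1 eq_refl) check1) as H1.
  pose proof (gen_identity zeta tau 2 data2 Hy (valid_all 2 data2 eq_refl) check2) as H2.
  pose proof (gen_identity zeta tau 4 data3 Hy (valid_all 4 data3 eq_refl) check3) as H3.
  pose proof (gen_identity zeta tau 6 data4 Hy (valid_all 6 data4 eq_refl) check4) as H4.
  pose proof (gen_identity zeta tau 8 data5 Hy (valid_all 8 data5 eq_refl) check5) as H5.
  unfold data1, data2, data3, data4, data5 in *. cbn [lsum sg ex c1 c2 k1 k2] in H1, H2, H3, H4, H5.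
  unfold coefC in *. cbn [sg ex] in H1, H2, H3, H4, H5. rewrite !w0 in H1, H2, H3, H4, H5.
  repeat split.
  - rewrite <- H1. ring.
  - rewrite <- H2. ring.
  - rewrite <- H3. ring.
  - rewrite <- H4. ring.
  - rewrite <- H5. ring.
Qed.
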